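(* Let $\mathcal{R}$ be a set of rules on a finite set $Q$, let $X\subseteq Q$, and let $S\in\mathcal{K}(\mathcal{R})$ be a proper subset of $X$. Define $\mathcal{R}^X_S=\{(A\cap X,q): (A,q)\in\mathcal{R},\ A\cap S=\emptyset,\ q\in X\setminus A\}$. Then for $x\in X\setminus S$, the set $S\cup\{x\}$ belongs to $\mathcal{K}(\mathcal{R})$ if and only if $\mathcal{R}^X_S$ contains no rule of the form $(A,x)$.
   Context: A rule on $Q$ is a pair $(A,q)$ with $A\subseteq Q$, $q\in Q$; it accepts $Y\subseteq Q$ if $q\in Y$ implies $Y\cap A\neq\emptyset$. $\mathcal{K}(\mathcal{R})$ is the family of subsets of $Q$ accepted by all rules of $\mathcal{R}$. *)

(* Defs.v *)
From mathcomp Require Import all_boot.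
Set Implicit Arguments. Unset Strict Implicit. Unset Printing Implicit Defensive.

Definition rule (Q : finType) := ({set Q} * Q)%type.

Definition accepts (Q : finType) (r : rule Q) (Y : {set Q}) : bool :=
  (r.2 \in Y) ==> (Y :&: r.1 != set0).

Definition K (Q : finType) (R : {set rule Q}) : {set {set Q}} :=
  [set Y : {set Q} | [forall r in R, accepts r Y]].

Definition restr_rules (Q : finType) (R : {set rule Q}) (X S : {set Q})
  : {set rule Q} :=
  [set ((r.1 :&: X), r.2) | r in R & (r.1 :&: S == set0) && (r.2 \in X :\: r.1)].

(* Main.v *)
Require Import Defs.
From mathcomp Require Import all_boot.

Theorem lemma3p2 (Q : finType) (R : {set rule Q}) (X S : {set Q}) (x : Q) :
  S \in K R -> S \proper X -> x \in X :\: S ->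
  (x |: S \in K R) <-> ~ (exists A : {set Q}, (A, x) \in restr_rules R X S).
Proof.
move=> SK _ xXS.
move: SK; rewrite !inE => /forallP SK.
have xX : x \in X by move: xXS; rewrite inE => /andP[].
split.
- move=> /forallP Kx [A /imsetP [r]].
  rewrite inE => /andP [rR /andP [rS rx]] [_ e2].
  have := Kx r; rewrite rR /accepts -e2 setU11 /= => /set0Pn [y].
  rewrite !inE => /andP [/orP [/eqP -> | yS] yr].
  + by move: rx; rewrite -e2 !inE yr.
  + have : y \in r.1 :&: S by rewrite inE yS yr.
    by rewrite (eqP rS) inE.
- move=> H; apply/forallP => r; apply/implyP => rR; apply/implyP.
  rewrite !inE => /orP [/eqP r2 | r2S].
  + apply/negP => /eqP E; apply: H; exists (r.1 :&: X).
    apply/imsetP; exists r => /=; last by rewrite r2.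
    rewrite inE rR /=.
    have xr : x \notin r.1.
      apply/negP => xr; have : x \in (x |: S) :&: r.1 by rewrite !inE eqxx xr.
      by rewrite E inE.
    rewrite !inE r2 xr xX /= andbT.
    apply/eqP/setP => y; rewrite !inE; apply/negP => /andP [yS yr].
    have : y \in (x |: S) :&: r.1 by rewrite !inE yS yr orbT.
    by rewrite E inE.
  + have := SK r; rewrite rR /accepts r2S /= => /set0Pn [y].
    rewrite inE => /andP [yS yr]; apply/set0Pn; exists y.
    by rewrite !inE yS yr orbT.
Qed.
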